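(* Let $\mathcal A$ be a weighted ODCA over $\mathbb F$, $K=|Q|\cdot|C|$, $c$ a configuration, $V\subseteq\mathbb F^{|Q|}$ a subspace, $S\subseteq C$ and $X\subseteq\mathbb N$. If $z$ is a minimal witness for $(c,\overline V,S,X)$ and exactly $t$ distinct counter values occur in the run of $z$ from $c$, then $|z|\le t\cdot K$.
   Context: Fix a field $\mathbb{F}$ and a finite alphabet $\Sigma$. For $n\in\mathbb N$ let $\mathrm{sgn}(n)=0$ if $n=0$ and $1$ if $n>0$. A weighted ODCA is $\mathcal{A}=((C,\delta_0,\delta_1,p_0),(Q,\lambda,\Delta,\eta))$ where $C$ is a finite nonempty set of counter states, $\delta_0:C\times\Sigma\to C\times\{0,+1\}$ and $\delta_1:C\times\Sigma\to C\times\{-1,0,+1\}$ are deterministic counter transition functions, $p_0\in C$, $Q$ is a finite nonempty set of states, $\lambda,\eta\in\mathbb{F}^{|Q|}$, and $\Delta:\Sigma\times\{0,1\}\to\mathbb{F}^{|Q|\times|Q|}$. A configuration is a triple $(x,p,n)\in\mathbb{F}^{|Q|}\times C\times\mathbb{N}$ (weight vector, counter state, counter value). Reading $a\in\Sigma$ from $(x,p,n)$ with $d=\mathrm{sgn}(n)$ and $\delta_d(p,a)=(p',e)$ leads to $(x\Delta(a,d),p',n+e)$; for each word $w$ and configuration $c$ there is a unique run of $w$ from $c$. For a subspace $V\subseteq\mathbb F^{|Q|}$ let $\overline V=\mathbb F^{|Q|}\setminus V$. For $S\subseteq C$ and $X\subseteq\mathbb N$, a word $z$ is a witness for $(c,\overline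 V,S,X)$ if the run of $z$ from $c$ ends in a configuration $(x,p,n)$ with $x\in\overline V$, $p\in S$, $n\in X$; it is a minimal witness if no strictly shorter word is a witness. *)

(* Defs.v *)
From HB Require Import structures.
From mathcomp Require Import all_boot all_order all_algebra.
Set Implicit Arguments. Unset Strict Implicit. Unset Printing Implicit Defensive.
Import GRing.Theory.
Local Open Scope ring_scope.

Inductive move0 := M0zero | M0inc.
Inductive move1 := M1dec | M1zero | M1inc.

(* A weighted ODCA over the field F, alphabet Sigma, counter states C, states Q.
   Weight vectors live in F^{|Q|} = 'rV[F]_#|Q| (row vectors, x * Delta). *)
Record wodca (F : fieldType) (Sigma C Q : finType) := WODCA {
  delta0 : C -> Sigma -> C * move0;
  delta1 : C -> Sigma -> C * move1;
  p0 : C;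
  lam : 'rV[F]_#|Q|;
  Delta : Sigma -> bool -> 'M[F]_#|Q|;   (* Delta a d, with d = sgn n as bool *)
  eta : 'rV[F]_#|Q|
}.

Definition config (F : fieldType) (C Q : finType) := ('rV[F]_#|Q| * C * nat)%type.

Definition step (F : fieldType) (Sigma C Q : finType) (A : wodca F Sigma C Q)
  (c : config F C Q) (a : Sigma) : config F C Q :=
  let: (x, p, n) := c in
  if n == 0%N then
    let: (p', e) := delta0 A p a in
    (x *m Delta A a false, p', match e with M0zero => n | M0inc => n.+1 end)
  else
    let: (p', e) := delta1 A p a in
    (x *m Delta A a true, p', match e with M1dec => n.-1 | M1zero => n | M1inc => n.+1 end).

Fixpoint run (F : fieldType) (Sigma C Q : finType) (A : wodca F Sigma C Q)
  (c : config F C Q) (w : seq Sigma) : seq (config F C Q) :=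
  match w with
  | [::] => [:: c]
  | a :: w' => c :: run A (step A c a) w'
  end.

Definition final (F : fieldType) (Sigma C Q : finType) (A : wodca F Sigma C Q)
  (c : config F C Q) (w : seq Sigma) : config F C Q := foldl (step A) c w.

(* A subspace V of F^{|Q|} is given as the row space of a matrix V;
   x \in V  iff  (x <= V)%MS.  The complement \overline V is its negation. *)
Definition witness (F : fieldType) (Sigma C Q : finType) (A : wodca F Sigma C Q)
  (c : config F C Q) (V : 'M[F]_#|Q|) (S : {set C}) (X : nat -> Prop)
  (z : seq Sigma) : Prop :=
  let: (x, p, n) := final A c z in
  ~~ (x <= V)%MS /\ p \in S /\ X n.

Definition minimal_witness (F : fieldType) (Sigma C Q : finType) (A : wodca F Sigma C Q)
  (c : config F C Q) (V : 'M[F]_#|Q|) (S : {set C}) (X : nat -> Prop)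
  (z : seq Sigma) : Prop :=
  witness A c V S X z /\
  forall z' : seq Sigma, (size z' < size z)%N -> ~ witness A c V S X z'.

Definition num_counter_values (F : fieldType) (Sigma C Q : finType)
  (A : wodca F Sigma C Q) (c : config F C Q) (w : seq Sigma) : nat :=
  size (undup [seq cf.2 | cf <- run A c w]).

(* Main.v *)
Require Import Defs.
From mathcomp Require Import all_boot all_order all_algebra zify.

Lemma final_cat (F : fieldType) (Sigma C Q : finType) (A : wodca F Sigma C Q) c u v :
  final A c (u ++ v) = final A (final A c u) v.
Proof. by rewrite /final foldl_cat. Qed.

Lemma step_lin (F : fieldType) (Sigma C Q : finType) (A : wodca F Sigma C Q) p n a :
  exists D p1 n1, forall x, step A (x, p, n) a = ((x *m D)%R, p1, n1).
Proof.
rewrite /step; case: eqP => _.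
- case: (delta0 A p a) => p' e; do 3 eexists; move=> x; reflexivity.
- case: (delta1 A p a) => p' e; do 3 eexists; move=> x; reflexivity.
Qed.

Lemma final_lin (F : fieldType) (Sigma C Q : finType) (A : wodca F Sigma C Q) w :
  forall p n, exists M p' n', forall x, final A (x, p, n) w = ((x *m M)%R, p', n').
Proof.
elim: w => [|a w IH] p n.
  by exists 1%:M%R, p, n => x; rewrite mulmx1.
have [D [p1 [n1 HD]]] := @step_lin _ _ _ _ A p n a.
have [M [p' [n' HM]]] := IH p1 n1.
exists (D *m M)%R, p', n' => x; change (final A (step A (x, p, n) a) w = ((x *m (D *m M))%R, p', n')); rewrite HD.
by rewrite HM mulmxA.
Qed.

Lemma run_map (F : fieldType) (Sigma C Q : finType) (A : wodca F Sigma C Q) w :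
  forall c, run A c w = [seq final A c (take i w) | i <- iota 0 (size w).+1].
Proof.
elim: w => [|a w IH] c //=.
rewrite IH /=; congr (_ :: _).
rewrite (_ : iota 2 _ = map (addn 1) (iota 1 (size w))); last by rewrite -iotaDl.
rewrite -map_comp; congr (_ :: _); apply: eq_map => i /=; by rewrite add1n.
Qed.

Lemma size_undup_count (T : eqType) (s : seq T) q :
  (forall k, k \in undup s -> count_mem k s <= q) -> size s <= size (undup s) * q.
Proof.
move=> H.
rewrite -sum1_size -big_undup_iterop_count.
rewrite mulnC -sum1_size big_distrr /= !big_seq.
apply: leq_sum => k Hk; rewrite Monoid.iteropE muln1.
have -> : forall n, iter n (addn 1) 0 = n by elim=> //= n ->.
exact: H.
Qed.

Theorem mainTheorem9 (F : fieldType) (Sigma C Q : finType)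
  (A : wodca F Sigma C Q) (HQ : (0 < #|Q|)%N)
  (c : config F C Q) (V : 'M[F]_#|Q|) (S : {set C}) (X : nat -> Prop)
  (z : seq Sigma) (t : nat) :
  minimal_witness A c V S X z ->
  num_counter_values A c z = t ->
  (size z <= t * (#|Q| * #|C|))%N.
Proof.
move=> [Hw Hmin] Ht.
set m := size z.
pose cf i := final A c (take i z).
pose y i := (cf i).1.1.
pose key i := ((cf i).1.2, (cf i).2).
pose K := [seq key i | i <- iota 0 m.+1].
pose T := undup [seq cf0.2 | cf0 <- run A c z].
have tT : t = size T by rewrite -Ht.
have HKsub : size (undup K) <= #|C| * t.
  rewrite tT cardE -(size_allpairs pair).
  apply: uniq_leq_size; first exact: undup_uniq.
  move=> k; rewrite mem_undup => /mapP [i Hi ->].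
  apply: allpairs_f; first by rewrite mem_enum.
  rewrite mem_undup run_map; apply/mapP; exists (cf i) => //.
  exact: map_f.
rewrite leqNgt; apply/negP => Hlt.
have [[p n] Hk Hcnt] : exists2 k, k \in undup K & #|Q| < count_mem k K.
  apply/hasP; rewrite -[has _ _]negbK; apply/negP => /hasPn Hn.
  have H1 := @size_undup_count _ K #|Q| (fun k Hk => ltac:(by rewrite leqNgt; exact: Hn)).
  have H2 : size (undup K) * #|Q| <= #|C| * t * #|Q| := leq_mul HKsub (leqnn _).
  move: H1; rewrite size_map size_iota => H1.
  nia.
have Hdec : forall i, i <= m -> final A c z = final A (cf i) (drop i z).
  by move=> i _; rewrite /cf -final_cat cat_take_drop.
have Hcf : forall i, key i = (p, n) -> cf i = (y i, p, n).
  by move=> i; rewrite /key /y; case: (cf i) => [[x p'] n'] /= [-> ->].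
pose spanl (s : seq nat) := foldr (fun i U => (y i + U)%MS) (0 : 'M[F]_#|Q|)%R s.
have Hspan : forall s M, (forall l, l \in s -> ((y l *m M)%R <= V)%MS) ->
    ((spanl s *m M)%R <= V)%MS.
  move=> s M; elim: s => [|i s IHs] Hs /=; first by rewrite mul0mx sub0mx.
  rewrite addsmxMr addsmx_sub Hs ?mem_head //= IHs // => l Hl.
  by apply: Hs; rewrite in_cons Hl orbT.
have Hmain : forall j, j <= m.+1 ->
    size [seq i <- rev (iota 0 j) | key i == (p, n)] <=
    \rank (spanl [seq i <- rev (iota 0 j) | key i == (p, n)]).
  elim=> [|j IH] Hj; first by [].
  rewrite -addn1 iotaD add0n cats1 rev_rcons /=.
  case: ifP => Hkj; last exact: IH (ltnW Hj).
  rewrite /=.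
  have {}IH := IH (ltnW Hj).
  apply: leq_ltn_trans IH _; apply: rank_ltmx.
  rewrite ltmxE addsmxSr /= addsmx_sub submx_refl andbT.
  apply/negP => Hsub.
  have [M [p' [n' HM]]] := @final_lin _ _ _ _ A (drop j z) p n.
  have Hfz : final A c z = ((y j *m M)%R, p', n').
    by rewrite (Hdec j) // (Hcf j (eqP Hkj)) HM.
  move: Hw; rewrite /witness Hfz => -[Hnv [HS HX]].
  move/negP: Hnv; apply.
  apply: submx_trans (submxMr M Hsub) _.
  apply: Hspan => l; rewrite mem_filter mem_rev mem_iota add0n => /andP [Hkl Hl].
  apply/negPn/negP => Hnl.
  apply: (Hmin (take l z ++ drop j z)).
    rewrite size_cat size_takel ?size_drop -/m; lia.
  rewrite /witness final_cat -/(cf l) (Hcf l (eqP Hkl)) HM.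
  by split.
have := Hmain m.+1 (leqnn _).
rewrite size_filter count_rev => H.
have := leq_trans H (rank_leq_col _).
rewrite leqNgt; apply/negP/negPn.
by move: Hcnt; rewrite count_map.
Qed.
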